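(* Let $\pi_+\in(0,1)$, $\pi_-=1-\pi_+$, let $p_+,p_-$ be densities on $\mathcal{X}$ and $\widetilde{p}_+=\frac{\pi_+p_++\pi_-^2p_-}{\pi_-^2+\pi_+}$, $\widetilde{p}_-=\frac{\pi_+^2p_++\pi_-p_-}{\pi_+^2+\pi_-}$. Let $\ell:\mathbb{R}\times\{+1,-1\}\to\mathbb{R}_+$ be a loss, $\mathcal{F}$ a class of functions $\mathcal{X}\to\mathbb{R}$, and let $\boldsymbol{x}_1,\dots,\boldsymbol{x}_n,\boldsymbol{x}_1',\dots,\boldsymbol{x}_n'\in\mathcal{X}$ be given points. Define $R(f)=\pi_+\mathbb{E}_{p_+}[\ell(f(\boldsymbol{x}),+1)]+\pi_-\mathbb{E}_{p_-}[\ell(f(\boldsymbol{x}),-1)]$, $$R^+_{\mathrm{PC}}(f)=\mathbb{E}_{\widetilde{p}_+(\boldsymbol{x})}[\ell(f(\boldsymbol{x}),+1)-\pi_+\ell(f(\boldsymbol{x}),-1)],\quad \widehat{R}^+_{\mathrm{PC}}(f)=\frac1n\sum_{i=1}^n\big(\ell(f(\boldsymbol{x}_i),+1)-\pi_+\ell(f(\boldsymbol{x}_i),-1)\big),$$ $$R^-_{\mathrm{PC}}(f)=\mathbb{E}_{\widetilde{p}_-(\boldsymbol{x}')}[\ell(f(\boldsymbol{x}'),-1)-\pi_-\ell(f(\boldsymbol{x}'),+1)],\quad \widehat{R}^-_{\mathrm{PC}}(f)=\frac1n\sum_{i=1}^n\big(\ell(f(\boldsymbol{x}_i'),-1)-\pi_-\ell(f(\boldsymbol{x}_i'),+1)\big),$$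 $\widehat{R}_{\mathrm{PC}}=\widehat{R}^+_{\mathrm{PC}}+\widehat{R}^-_{\mathrm{PC}}$, $\widehat{f}_{\mathrm{PC}}\in\arg\min_{f\in\mathcal{F}}\widehat{R}_{\mathrm{PC}}(f)$ and $f^\star\in\arg\min_{f\in\mathcal{F}}R(f)$. Then $$R(\widehat{f}_{\mathrm{PC}})-R(f^\star)\le2\sup_{f\in\mathcal{F}}\big|R^+_{\mathrm{PC}}(f)-\widehat{R}^+_{\mathrm{PC}}(f)\big|+2\sup_{f\in\mathcal{F}}\big|R^-_{\mathrm{PC}}(f)-\widehat{R}^-_{\mathrm{PC}}(f)\big|.$$
   Context: $\pi_\pm$ are class priors and $p_\pm$ class-conditional densities of a binary classification problem; $\widetilde{p}_\pm$ are the marginals of the first/second components of pairwise comparison data, and in the intended application $\boldsymbol{x}_i\sim\widetilde{p}_+$, $\boldsymbol{x}_i'\sim\widetilde{p}_-$. *)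

(* Defs.v *)
From HB Require Import structures.
From mathcomp Require Import all_boot all_order all_algebra.
From mathcomp Require Import all_classical all_reals all_analysis.
Set Implicit Arguments. Unset Strict Implicit. Unset Printing Implicit Defensive.
Import Order.TTheory GRing.Theory Num.Theory.
Local Open Scope classical_set_scope.
Local Open Scope ring_scope.

Section PCDefs.
Context {d : measure_display} {T : measurableType d} {R : realType}.
Variable mu : {measure set T -> \bar R}.

Definition Ep (p : T -> R) (g : T -> R) : R :=
  Rintegral mu setT (fun x => p x * g x).

Definition is_density (p : T -> R) : Prop :=
  [/\ measurable_fun setT p, (forall x, 0 <= p x) &
      (\int[mu]_x (p x)%:E = 1)%E].

(* labels: true = +1, false = -1 *)
Definition risk (pp : R) (pP pN : T -> R) (ell : R -> bool -> R) (f : T -> R) : R :=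
  pp * Ep pP (fun x => ell (f x) true) + (1 - pp) * Ep pN (fun x => ell (f x) false).

Definition ptilde_plus (pp : R) (pP pN : T -> R) (x : T) : R :=
  (pp * pP x + (1 - pp) ^+ 2 * pN x) / ((1 - pp) ^+ 2 + pp).

Definition ptilde_minus (pp : R) (pP pN : T -> R) (x : T) : R :=
  (pp ^+ 2 * pP x + (1 - pp) * pN x) / (pp ^+ 2 + (1 - pp)).

Definition RPC_plus (pp : R) (pP pN : T -> R) (ell : R -> bool -> R) (f : T -> R) : R :=
  Ep (ptilde_plus pp pP pN) (fun x => ell (f x) true - pp * ell (f x) false).

Definition RPC_minus (pp : R) (pP pN : T -> R) (ell : R -> bool -> R) (f : T -> R) : R :=
  Ep (ptilde_minus pp pP pN) (fun x => ell (f x) false - (1 - pp) * ell (f x) true).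

End PCDefs.

Definition RPC_hat_plus {T : Type} {R : realType} (pp : R) (ell : R -> bool -> R)
  (n : nat) (xs : 'I_n -> T) (f : T -> R) : R :=
  n%:R^-1 * \sum_(i < n) (ell (f (xs i)) true - pp * ell (f (xs i)) false).

Definition RPC_hat_minus {T : Type} {R : realType} (pp : R) (ell : R -> bool -> R)
  (n : nat) (xs' : 'I_n -> T) (f : T -> R) : R :=
  n%:R^-1 * \sum_(i < n) (ell (f (xs' i)) false - (1 - pp) * ell (f (xs' i)) true).

Definition RPC_hat {T : Type} {R : realType} (pp : R) (ell : R -> bool -> R)
  (n : nat) (xs xs' : 'I_n -> T) (f : T -> R) : R :=
  RPC_hat_plus pp ell xs f + RPC_hat_minus pp ell xs' f.

(* Main.v *)
Require Import Defs.
From HB Require Import structures.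
From mathcomp Require Import all_boot all_order all_algebra.
From mathcomp Require Import all_classical all_reals all_analysis.
From mathcomp Require Import ring lra.
Import Order.TTheory GRing.Theory Num.Theory.
Local Open Scope classical_set_scope.
Local Open Scope ring_scope.

Lemma Rint_lin4 (d : measure_display) (T : measurableType d) (R : realType)
  (mu : {measure set T -> \bar R}) (a1 a2 a3 a4 : R) (g1 g2 g3 g4 : T -> R) :
  mu.-integrable setT (EFin \o g1) -> mu.-integrable setT (EFin \o g2) ->
  mu.-integrable setT (EFin \o g3) -> mu.-integrable setT (EFin \o g4) ->
  Rintegral mu setT (fun x => a1 * g1 x + a2 * g2 x + a3 * g3 x + a4 * g4 x) =
  a1 * Rintegral mu setT g1 + a2 * Rintegral mu setT g2
  + a3 * Rintegral mu setT g3 + a4 * Rintegral mu setT g4.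
Proof.
move=> i1 i2 i3 i4.
have iZ : forall a g, mu.-integrable setT (EFin \o g) ->
   mu.-integrable setT (EFin \o (fun x => a * g x)).
  move=> a g ig; exact: (integrableZl measurableT a ig).
have iD : forall g h, mu.-integrable setT (EFin \o g) ->
   mu.-integrable setT (EFin \o h) ->
   mu.-integrable setT (EFin \o (fun x => g x + h x)).
  move=> g h ig ih; exact: (integrableD measurableT ig ih).
have j1 := iZ a1 g1 i1. have j2 := iZ a2 g2 i2.
have j3 := iZ a3 g3 i3. have j4 := iZ a4 g4 i4.
have k12 := iD _ _ j1 j2. have k123 := iD _ _ k12 j3.
rewrite (RintegralD measurableT k123 j4).
rewrite (RintegralD measurableT k12 j3).
rewrite (RintegralD measurableT j1 j2).
by rewrite !RintegralZl.
Qed.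

Theorem lemma2 (d : measure_display) (T : measurableType d) (R : realType)
  (mu : {measure set T -> \bar R})
  (pp : R) (pP pN : T -> R) (ell : R -> bool -> R) (F : set (T -> R))
  (n : nat) (xs xs' : 'I_n -> T) (fhat fstar : T -> R) :
  0 < pp < 1 ->
  is_density mu pP -> is_density mu pN ->
  (forall z y, 0 <= ell z y) ->
  (forall f y, F f ->
     mu.-integrable setT (fun x => (pP x * ell (f x) y)%:E) /\
     mu.-integrable setT (fun x => (pN x * ell (f x) y)%:E)) ->
  (0 < n)%N ->
  F fhat -> (forall f, F f -> RPC_hat pp ell xs xs' fhat <= RPC_hat pp ell xs xs' f) ->
  F fstar -> (forall f, F f -> risk mu pp pP pN ell fstar <= risk mu pp pP pN ell f) ->
  ((risk mu pp pP pN ell fhat - risk mu pp pP pN ell fstar)%:E <=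
     2%:E * ereal_sup [set (`|RPC_plus mu pp pP pN ell f - RPC_hat_plus pp ell xs f|)%:E | f in F]
   + 2%:E * ereal_sup [set (`|RPC_minus mu pp pP pN ell f - RPC_hat_minus pp ell xs' f|)%:E | f in F])%E.
Proof.
move=> /andP[pp0 pp1] _ _ _ hint _ Fh hmin Fs _.
have K1 : (1 - pp) ^+ 2 + pp != 0 by apply/lt0r_neq0; nra.
have K2 : pp ^+ 2 + (1 - pp) != 0 by apply/lt0r_neq0; nra.
have key : forall f, F f -> risk mu pp pP pN ell f =
    RPC_plus mu pp pP pN ell f + RPC_minus mu pp pP pN ell f.
  move=> f Ff.
  have [iPt iNt] := hint f true Ff.
  have [iPf iNf] := hint f false Ff.
  rewrite /risk /RPC_plus /RPC_minus /Ep.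
  set A := Rintegral mu setT (fun x => pP x * ell (f x) true).
  set B := Rintegral mu setT (fun x => pP x * ell (f x) false).
  set C := Rintegral mu setT (fun x => pN x * ell (f x) true).
  set D := Rintegral mu setT (fun x => pN x * ell (f x) false).
  set K := (1 - pp) ^+ 2 + pp.
  set L := pp ^+ 2 + (1 - pp).
  have -> : Rintegral mu setT (fun x => ptilde_plus pp pP pN x *
      (ell (f x) true - pp * ell (f x) false)) =
    Rintegral mu setT (fun x => (pp / K) * (pP x * ell (f x) true)
      + ((1 - pp) ^+ 2 / K) * (pN x * ell (f x) true)
      + (- (pp ^+ 2 / K)) * (pP x * ell (f x) false)
      + (- (pp * (1 - pp) ^+ 2 / K)) * (pN x * ell (f x) false)).
    congr Rintegral; apply: funext => x; rewrite /ptilde_plus -/K.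
    by field.
  have -> : Rintegral mu setT (fun x => ptilde_minus pp pP pN x *
      (ell (f x) false - (1 - pp) * ell (f x) true)) =
    Rintegral mu setT (fun x => (- (pp ^+ 2 * (1 - pp) / L)) * (pP x * ell (f x) true)
      + (- ((1 - pp) ^+ 2 / L)) * (pN x * ell (f x) true)
      + (pp ^+ 2 / L) * (pP x * ell (f x) false)
      + ((1 - pp) / L) * (pN x * ell (f x) false)).
    congr Rintegral; apply: funext => x; rewrite /ptilde_minus -/L.
    by field.
  rewrite !Rint_lin4 // -/A -/B -/C -/D.
  rewrite /K /L in K1 K2 *.
  by field.
have h2 : forall s : \bar R, (2%:E * s = s + s)%E.
  case => [r||] //=; first by rewrite -EFinD -EFinM; congr EFin; ring.
    by rewrite mulry gtr0_sg // mul1e.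
  by rewrite mulrNy gtr0_sg // mul1e.
set s1 := ereal_sup _.
set s2 := ereal_sup _.
set P := RPC_plus mu pp pP pN ell.
set M := RPC_minus mu pp pP pN ell.
set hp := RPC_hat_plus pp ell xs.
set hm := RPC_hat_minus pp ell xs'.
have u1 : (`|P fhat - hp fhat|%:E <= s1)%E by apply: ereal_sup_ubound; exists fhat.
have u2 : (`|P fstar - hp fstar|%:E <= s1)%E by apply: ereal_sup_ubound; exists fstar.
have v1 : (`|M fhat - hm fhat|%:E <= s2)%E by apply: ereal_sup_ubound; exists fhat.
have v2 : (`|M fstar - hm fstar|%:E <= s2)%E by apply: ereal_sup_ubound; exists fstar.
have hr : risk mu pp pP pN ell fhat - risk mu pp pP pN ell fstar <=
   (`|P fhat - hp fhat| + `|P fstar - hp fstar|) +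
   (`|M fhat - hm fhat| + `|M fstar - hm fstar|).
  rewrite !key // -/P -/M.
  have := hmin fstar Fs; rewrite /RPC_hat -/hp -/hm => hh.
  have a1 := ler_norm (P fhat - hp fhat).
  have a2 := ler_norm (hp fstar - P fstar).
  have a3 := ler_norm (M fhat - hm fhat).
  have a4 := ler_norm (hm fstar - M fstar).
  rewrite (distrC (P fstar)) (distrC (M fstar)).
  lra.
apply: (le_trans (y := ((`|P fhat - hp fhat| + `|P fstar - hp fstar|)%:E +
   (`|M fhat - hm fhat| + `|M fstar - hm fstar|)%:E)%E)).
  by rewrite -EFinD lee_fin.
by rewrite !h2 !EFinD; apply: leeD; apply: leeD.
Qed.
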